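(* Let $f:\mathbb H\to\mathbb C$ be polar-analytic on $\mathbb H$ and let $(r_1,\theta_1),(r_2,\theta_2)\in\mathbb H$. Then the line integral $$\int_\gamma f(r,\theta)\,e^{i\theta}\,(dr+ir\,d\theta)$$ has the same value for every regular curve $\gamma$ in $\mathbb H$ starting at $(r_1,\theta_1)$ and ending at $(r_2,\theta_2)$. In particular, this integral vanishes for every closed regular curve $\gamma$ in $\mathbb H$.
   Context: $\mathbb H:=\{(r,\theta): r>0,\ \theta\in\mathbb R\}$. A function $f:\mathbb H\to\mathbb C$ is called polar-analytic on $\mathbb H$ if for every $(r_0,\theta_0)\in\mathbb H$ the limit $$(D_{\rm pol}f)(r_0,\theta_0):=\lim_{(r,\theta)\to(r_0,\theta_0)}\frac{f(r,\theta)-f(r_0,\theta_0)}{re^{i\theta}-r_0e^{i\theta_0}}$$ exists (with $re^{i\theta}\neq r_0e^{i\theta_0}$), independently of how $(r,\theta)$ approaches $(r_0,\theta_0)$ within $\mathbb H$. A regular curve is a piecewise continuously differentiable curve $\gamma:[a,b]\to\mathbb H$, $t\mapsto(r(t),\theta(t))$, and the line integral means $\int_a^b f(r(t),\theta(t))e^{i\theta(t)}\big(r'(t)+ir(t)\theta'(t)\big)\,dt$. *)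

(* Defs.v *)
From Stdlib Require Import Reals Lra.
Open Scope R_scope.

Definition Cpx : Type := (R * R)%type.
Definition C0 : Cpx := (0, 0).
Definition Cadd (z w : Cpx) : Cpx := (fst z + fst w, snd z + snd w).
Definition Csub (z w : Cpx) : Cpx := (fst z - fst w, snd z - snd w).
Definition Cmul (z w : Cpx) : Cpx :=
  (fst z * fst w - snd z * snd w, fst z * snd w + snd z * fst w).
Definition Cnorm (z : Cpx) : R := sqrt (fst z ^ 2 + snd z ^ 2).
Definition Cinv (z : Cpx) : Cpx :=
  (fst z / (fst z ^ 2 + snd z ^ 2), - snd z / (fst z ^ 2 + snd z ^ 2)).
Definition Cdiv (z w : Cpx) : Cpx := Cmul z (Cinv w).

Definition Cexpi (th : R) : Cpx := (cos th, sin th).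
Definition polar (r th : R) : Cpx := (r * cos th, r * sin th).

Definition polar_analytic (f : R -> R -> Cpx) : Prop :=
  forall r0 th0 : R, 0 < r0 ->
  exists L : Cpx, forall eps : R, 0 < eps ->
  exists delta : R, 0 < delta /\
    forall r th : R, 0 < r ->
      polar r th <> polar r0 th0 ->
      sqrt ((r - r0) ^ 2 + (th - th0) ^ 2) < delta ->
      Cnorm (Csub (Cdiv (Csub (f r th) (f r0 th0))
                        (Csub (polar r th) (polar r0 th0))) L) < eps.

Definition C1_on (g dg : R -> R) (u v : R) : Prop :=
  (forall t, u <= t <= v -> forall eps, 0 < eps ->
     exists delta, 0 < delta /\
       forall s, u <= s <= v -> s <> t -> Rabs (s - t) < delta ->
         Rabs ((g s - g t) / (s - t) - dg t) < eps) /\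
  (forall t, u <= t <= v -> forall eps, 0 < eps ->
     exists delta, 0 < delta /\
       forall s, u <= s <= v -> Rabs (s - t) < delta ->
         Rabs (dg s - dg t) < eps).

Definition regular_curve (a b : R) (rc thc : R -> R) (n : nat) (p : nat -> R)
  (dr dth : nat -> R -> R) : Prop :=
  (1 <= n)%nat /\ p O = a /\ p n = b /\
  (forall i, (i < n)%nat -> p i < p (S i)) /\
  (forall t, a <= t <= b -> 0 < rc t) /\
  (forall i, (i < n)%nat ->
     C1_on rc (dr i) (p i) (p (S i)) /\ C1_on thc (dth i) (p i) (p (S i))).

Definition CRint (g : R -> Cpx) (u v : R) (z : Cpx) : Prop :=
  (exists pr : Riemann_integrable (fun t => fst (g t)) u v, RiemannInt pr = fst z) /\
  (exists pr : Riemann_integrable (fun t => snd (g t)) u v, RiemannInt pr = snd z).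

Fixpoint Csum (n : nat) (z : nat -> Cpx) : Cpx :=
  match n with
  | O => C0
  | S m => Cadd (Csum m z) (z m)
  end.

Definition integrand (f : R -> R -> Cpx) (rc thc : R -> R) (dr dth : nat -> R -> R)
  (i : nat) (t : R) : Cpx :=
  Cmul (f (rc t) (thc t)) (Cmul (Cexpi (thc t)) (dr i t, rc t * dth i t)).

Definition line_integral (f : R -> R -> Cpx) (rc thc : R -> R) (n : nat)
  (p : nat -> R) (dr dth : nat -> R -> R) (z : Cpx) : Prop :=
  exists zs : nat -> Cpx,
    (forall i, (i < n)%nat ->
       CRint (integrand f rc thc dr dth i) (p i) (p (S i)) (zs i)) /\
    z = Csum n zs.

(* Main.v *)
Require Import Defs.
From Coquelicot Require Import Coquelicot.
From Stdlib Require Import Reals Lra Lia ClassicalEpsilon Classical FunctionalExtensionality.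
Import Defs.
Open Scope R_scope.

Definition N1 (z : Cpx) : R := Rabs (fst z) + Rabs (snd z).

Lemma N1_ge0 z : 0 <= N1 z.
Proof. unfold N1; pose proof (Rabs_pos (fst z)); pose proof (Rabs_pos (snd z)); lra. Qed.
Lemma fst_N1 z : Rabs (fst z) <= N1 z.
Proof. unfold N1; pose proof (Rabs_pos (snd z)); lra. Qed.
Lemma snd_N1 z : Rabs (snd z) <= N1 z.
Proof. unfold N1; pose proof (Rabs_pos (fst z)); lra. Qed.

Lemma Rabs_sub_le x y : Rabs (x - y) <= Rabs x + Rabs y.
Proof. unfold Rminus; eapply Rle_trans; [apply Rabs_triang|]; rewrite Rabs_Ropp; lra. Qed.

Lemma N1_mul a b : N1 (Cmul a b) <= N1 a * N1 b.
Proof.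
  destruct a as [a1 a2], b as [b1 b2]; unfold N1, Cmul; simpl.
  pose proof (Rabs_sub_le (a1*b1) (a2*b2)).
  pose proof (Rabs_triang (a1*b2) (a2*b1)).
  rewrite !Rabs_mult in *.
  pose proof (Rabs_pos a1); pose proof (Rabs_pos a2);
  pose proof (Rabs_pos b1); pose proof (Rabs_pos b2). nra.
Qed.

Lemma N1_add a b : N1 (Cadd a b) <= N1 a + N1 b.
Proof.
  destruct a as [a1 a2], b as [b1 b2]; unfold N1, Cadd; simpl.
  pose proof (Rabs_triang a1 b1); pose proof (Rabs_triang a2 b2); lra.
Qed.

Lemma sqrt_le_sum a b : sqrt (a ^ 2 + b ^ 2) <= Rabs a + Rabs b.
Proof.
  rewrite <- (sqrt_pow2 (Rabs a + Rabs b)).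
  2: pose proof (Rabs_pos a); pose proof (Rabs_pos b); lra.
  apply sqrt_le_1_alt.
  rewrite <- (pow2_abs a), <- (pow2_abs b).
  pose proof (Rabs_pos a); pose proof (Rabs_pos b); nra.
Qed.

Lemma abs_le_sqrt a b : Rabs a <= sqrt (a ^ 2 + b ^ 2).
Proof.
  rewrite <- (sqrt_pow2 (Rabs a)) by apply Rabs_pos.
  apply sqrt_le_1_alt. rewrite pow2_abs. nra.
Qed.

Lemma N1_Cnorm z : N1 z <= 2 * Cnorm z.
Proof.
  destruct z as [x y]; unfold N1, Cnorm; cbn [fst snd].
  pose proof (abs_le_sqrt x y); pose proof (abs_le_sqrt y x).
  rewrite (Rplus_comm (y ^ 2)) in H0. lra.
Qed.

Lemma Cdiv_mul a b : b <> (0,0) -> Cmul (Cdiv a b) b = a.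
Proof.
  destruct a as [a1 a2], b as [b1 b2]; intro Hb.
  assert (Hn : b1 ^ 2 + b2 ^ 2 <> 0).
  { intro H0. apply Hb. simpl in H0.
    assert (b1 = 0) by (nra).
    assert (b2 = 0) by (nra). subst; auto. }
  unfold Cdiv, Cmul, Cinv; simpl. f_equal; field; contradict Hn; simpl; nra.
Qed.

Lemma cos_lip a b : Rabs (cos a - cos b) <= Rabs (a - b).
Proof.
  destruct (MVT_gen cos b a (fun x => - sin x)) as [c [_ Hc]].
  - intros x _. apply is_derive_Reals. apply derivable_pt_lim_cos.
  - intros x _. apply continuity_cos.
  rewrite Hc, Rabs_mult. pose proof (SIN_bound c).
  assert (Rabs (- sin c) <= 1) by (rewrite Rabs_Ropp; apply Rabs_le; lra).
  pose proof (Rabs_pos (a - b)). nra.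
Qed.

Lemma sin_lip a b : Rabs (sin a - sin b) <= Rabs (a - b).
Proof.
  destruct (MVT_gen sin b a cos) as [c [_ Hc]].
  - intros x _. apply is_derive_Reals. apply derivable_pt_lim_sin.
  - intros x _. apply continuity_sin.
  rewrite Hc, Rabs_mult. pose proof (COS_bound c).
  assert (Rabs (cos c) <= 1) by (apply Rabs_le; lra).
  pose proof (Rabs_pos (a - b)). nra.
Qed.

Lemma polar_diff r th r0 th0 : 0 <= r0 ->
  N1 (Csub (polar r th) (polar r0 th0)) <= 2 * Rabs (r - r0) + 2 * r0 * Rabs (th - th0).
Proof.
  intro H0. unfold N1, Csub, polar; simpl.
  replace (r * cos th - r0 * cos th0) with ((r - r0) * cos th + r0 * (cos th - cos th0)) by ring.
  replace (r * sin th - r0 * sin th0) with ((r - r0) * sin th + r0 * (sin th - sin th0)) by ring.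
  pose proof (Rabs_triang ((r - r0) * cos th) (r0 * (cos th - cos th0))).
  pose proof (Rabs_triang ((r - r0) * sin th) (r0 * (sin th - sin th0))).
  rewrite !Rabs_mult in *. rewrite (Rabs_pos_eq r0) in * by lra.
  pose proof (cos_lip th th0); pose proof (sin_lip th th0).
  assert (Rabs (cos th) <= 1) by (apply Rabs_le; pose proof (COS_bound th); lra).
  assert (Rabs (sin th) <= 1) by (apply Rabs_le; pose proof (SIN_bound th); lra).
  pose proof (Rabs_pos (r - r0)). nra.
Qed.

Lemma polar_inj r th r0 th0 : 0 < r -> 0 < r0 -> Rabs (th - th0) < 1 ->
  polar r th = polar r0 th0 -> r = r0 /\ th = th0.
Proof.
  intros Hr Hr0 Hth Heq. unfold polar in Heq. injection Heq as E1 E2.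
  assert (Hrr : r = r0).
  { assert (r ^ 2 = r0 ^ 2).
    { pose proof (sin2_cos2 th); pose proof (sin2_cos2 th0). unfold Rsqr in *.
      replace (r ^ 2) with ((r * cos th) ^ 2 + (r * sin th) ^ 2) by (simpl; nra).
      rewrite E1, E2. simpl; nra. }
    nra. }
  subst r0. split; auto.
  assert (Ec : cos th = cos th0) by (apply Rmult_eq_reg_l with r; lra).
  assert (Es : sin th = sin th0) by (apply Rmult_eq_reg_l with r; lra).
  assert (Hs : sin (th - th0) = 0) by (rewrite sin_minus, Ec, Es; ring).
  pose proof PI2_1. pose proof PI_RGT_0.
  destruct (Rtotal_order (th - th0) 0) as [Hl|[He|Hg]].
  - rewrite Rabs_left in Hth by lra.
    assert (0 < sin (- (th - th0))) by (apply sin_gt_0; lra).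
    rewrite sin_neg in H1; lra.
  - lra.
  - rewrite Rabs_right in Hth by lra.
    assert (0 < sin (th - th0)) by (apply sin_gt_0; lra). lra.
Qed.

Definition cont (u : R -> R) (x : R) : Prop :=
  forall eps, 0 < eps -> exists d, 0 < d /\ forall y, Rabs (y - x) < d -> Rabs (u y - u x) < eps.

Definition C2 (k : R -> R -> Cpx) (r0 t0 : R) : Prop :=
  forall eps, 0 < eps -> exists d, 0 < d /\ forall r t, Rabs (r - r0) < d -> Rabs (t - t0) < d ->
    N1 (Csub (k r t) (k r0 t0)) < eps.

Lemma cont_cpt u x : cont u x -> continuity_pt u x.
Proof.
  intros H eps Heps. destruct (H eps Heps) as [d [Hd Hu]].
  exists d; split; auto. intros y [_ Hy]. unfold R_dist in *. apply Hu; auto.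
Qed.

Lemma cont_continuous u x : cont u x -> continuous u x.
Proof. intro H. apply continuity_pt_filterlim. apply cont_cpt; auto. Qed.

Lemma C2_const c r0 t0 : C2 (fun _ _ => c) r0 t0.
Proof.
  intros eps Heps; exists 1; split; [lra|]. intros r t _ _.
  unfold N1, Csub; simpl. rewrite !Rminus_diag_eq, Rabs_R0 by auto. lra.
Qed.

Lemma N1_sub_tri a b c : N1 (Csub a c) <= N1 (Csub a b) + N1 (Csub b c).
Proof.
  replace (Csub a c) with (Cadd (Csub a b) (Csub b c)).
  - apply N1_add.
  - unfold Cadd, Csub; simpl; f_equal; ring.
Qed.

Lemma C2_add k1 k2 r0 t0 : C2 k1 r0 t0 -> C2 k2 r0 t0 ->
  C2 (fun r t => Cadd (k1 r t) (k2 r t)) r0 t0.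
Proof.
  intros H1 H2 eps Heps.
  destruct (H1 (eps/2)) as [d1 [Hd1 P1]]; [lra|].
  destruct (H2 (eps/2)) as [d2 [Hd2 P2]]; [lra|].
  exists (Rmin d1 d2); split; [apply Rmin_pos; auto|]. intros r t Hr Ht.
  pose proof (Rmin_l d1 d2); pose proof (Rmin_r d1 d2).
  specialize (P1 r t ltac:(lra) ltac:(lra)). specialize (P2 r t ltac:(lra) ltac:(lra)).
  replace (Csub (Cadd (k1 r t) (k2 r t)) (Cadd (k1 r0 t0) (k2 r0 t0)))
    with (Cadd (Csub (k1 r t) (k1 r0 t0)) (Csub (k2 r t) (k2 r0 t0)))
    by (unfold Cadd, Csub; simpl; f_equal; ring).
  pose proof (N1_add (Csub (k1 r t) (k1 r0 t0)) (Csub (k2 r t) (k2 r0 t0))). lra.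
Qed.

Lemma C2_neg k r0 t0 : C2 k r0 t0 -> C2 (fun r t => Csub C0 (k r t)) r0 t0.
Proof.
  intros H eps Heps. destruct (H eps Heps) as [d [Hd P]]. exists d; split; auto.
  intros r t Hr Ht. specialize (P r t Hr Ht).
  replace (N1 (Csub (Csub C0 (k r t)) (Csub C0 (k r0 t0)))) with (N1 (Csub (k r t) (k r0 t0))); auto.
  unfold N1, Csub, C0; simpl.
  rewrite <- (Rabs_Ropp (fst (k r t) - fst (k r0 t0))), <- (Rabs_Ropp (snd (k r t) - snd (k r0 t0))).
  f_equal; f_equal; ring.
Qed.

Lemma C2_sub k1 k2 r0 t0 : C2 k1 r0 t0 -> C2 k2 r0 t0 ->
  C2 (fun r t => Csub (k1 r t) (k2 r t)) r0 t0.
Proof.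
  intros H1 H2. pose proof (C2_add _ _ _ _ H1 (C2_neg _ _ _ H2)).
  intros eps Heps. destruct (H eps Heps) as [d [Hd P]]. exists d; split; auto.
  intros r t Hr Ht. specialize (P r t Hr Ht).
  replace (Csub (Csub (k1 r t) (k2 r t)) (Csub (k1 r0 t0) (k2 r0 t0))) with
    (Csub (Cadd (k1 r t) (Csub C0 (k2 r t))) (Cadd (k1 r0 t0) (Csub C0 (k2 r0 t0)))); auto.
  unfold Cadd, Csub, C0; simpl; f_equal; ring.
Qed.

Lemma C2_mul k1 k2 r0 t0 : C2 k1 r0 t0 -> C2 k2 r0 t0 ->
  C2 (fun r t => Cmul (k1 r t) (k2 r t)) r0 t0.
Proof.
  intros H1 H2 eps Heps.
  set (a0 := k1 r0 t0). set (b0 := k2 r0 t0).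
  pose proof (N1_ge0 a0); pose proof (N1_ge0 b0).
  set (eta := Rmin 1 (eps / (N1 a0 + N1 b0 + 2))).
  assert (Heta : 0 < eta) by (apply Rmin_pos; [lra|apply Rdiv_lt_0_compat; lra]).
  assert (Heta1 : eta <= 1) by apply Rmin_l.
  assert (Heta2 : eta * (N1 a0 + N1 b0 + 2) <= eps).
  { assert (eta <= eps / (N1 a0 + N1 b0 + 2)) by apply Rmin_r.
    apply Rmult_le_compat_r with (r := N1 a0 + N1 b0 + 2) in H3; [|lra].
    unfold Rdiv in H3. rewrite Rmult_assoc, Rinv_l in H3; lra. }
  destruct (H1 eta Heta) as [d1 [Hd1 P1]].
  destruct (H2 eta Heta) as [d2 [Hd2 P2]].
  exists (Rmin d1 d2); split; [apply Rmin_pos; auto|]. intros r t Hr Ht.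
  pose proof (Rmin_l d1 d2); pose proof (Rmin_r d1 d2).
  specialize (P1 r t ltac:(lra) ltac:(lra)). specialize (P2 r t ltac:(lra) ltac:(lra)).
  fold a0 b0 in P1, P2 |- *.
  replace (Csub (Cmul (k1 r t) (k2 r t)) (Cmul a0 b0)) with
    (Cadd (Cmul (Csub (k1 r t) a0) (k2 r t)) (Cmul a0 (Csub (k2 r t) b0)))
    by (unfold Cadd, Csub, Cmul; simpl; f_equal; ring).
  eapply Rle_lt_trans; [apply N1_add|].
  pose proof (N1_mul (Csub (k1 r t) a0) (k2 r t)).
  pose proof (N1_mul a0 (Csub (k2 r t) b0)).
  assert (N1 (k2 r t) <= N1 b0 + 1).
  { replace (k2 r t) with (Cadd b0 (Csub (k2 r t) b0)) by (unfold Cadd, Csub; simpl; destruct (k2 r t); simpl; f_equal; ring).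
    pose proof (N1_add b0 (Csub (k2 r t) b0)). lra. }
  pose proof (N1_ge0 (Csub (k1 r t) a0)). pose proof (N1_ge0 (k2 r t)).
  pose proof (N1_ge0 (Csub (k2 r t) b0)).
  nra.
Qed.

Lemma C2_expi r0 t0 : C2 (fun _ t => Cexpi t) r0 t0.
Proof.
  intros eps Heps. exists (eps/2); split; [lra|]. intros r t _ Ht.
  unfold N1, Csub, Cexpi; simpl. pose proof (cos_lip t t0); pose proof (sin_lip t t0). lra.
Qed.

Lemma C2_pair u v t0 s0 : cont u t0 -> cont v t0 -> C2 (fun t _ => (u t, v t)) t0 s0.
Proof.
  intros Hu Hv eps Heps.
  destruct (Hu (eps/2)) as [d1 [Hd1 P1]]; [lra|].
  destruct (Hv (eps/2)) as [d2 [Hd2 P2]]; [lra|].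
  exists (Rmin d1 d2); split; [apply Rmin_pos; auto|]. intros r t Hr Ht.
  pose proof (Rmin_l d1 d2); pose proof (Rmin_r d1 d2).
  specialize (P1 r ltac:(lra)). specialize (P2 r ltac:(lra)).
  unfold N1, Csub; simpl. lra.
Qed.

Lemma cont_id x : cont (fun y => y) x.
Proof. intros eps Heps; exists eps; split; auto. Qed.
Lemma cont_const c x : cont (fun _ => c) x.
Proof. intros eps Heps; exists 1; split; [lra|]. intros; rewrite Rminus_diag_eq, Rabs_R0; auto. Qed.

Lemma C2_fst k r0 t0 : C2 k r0 t0 -> cont (fun r => fst (k r t0)) r0.
Proof.
  intros H eps Heps. destruct (H eps Heps) as [d [Hd P]]. exists d; split; auto.
  intros y Hy. specialize (P y t0 Hy ltac:(rewrite Rminus_diag_eq, Rabs_R0; auto)).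
  pose proof (fst_N1 (Csub (k y t0) (k r0 t0))). unfold Csub in *; simpl in *. lra.
Qed.
Lemma C2_snd k r0 t0 : C2 k r0 t0 -> cont (fun r => snd (k r t0)) r0.
Proof.
  intros H eps Heps. destruct (H eps Heps) as [d [Hd P]]. exists d; split; auto.
  intros y Hy. specialize (P y t0 Hy ltac:(rewrite Rminus_diag_eq, Rabs_R0; auto)).
  pose proof (snd_N1 (Csub (k y t0) (k r0 t0))). unfold Csub in *; simpl in *. lra.
Qed.
Lemma C2_fst2 k r0 t0 : C2 k r0 t0 -> cont (fun t => fst (k r0 t)) t0.
Proof.
  intros H eps Heps. destruct (H eps Heps) as [d [Hd P]]. exists d; split; auto.
  intros y Hy. specialize (P r0 y ltac:(rewrite Rminus_diag_eq, Rabs_R0; auto) Hy).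
  pose proof (fst_N1 (Csub (k r0 y) (k r0 t0))). unfold Csub in *; simpl in *. lra.
Qed.
Lemma C2_snd2 k r0 t0 : C2 k r0 t0 -> cont (fun t => snd (k r0 t)) t0.
Proof.
  intros H eps Heps. destruct (H eps Heps) as [d [Hd P]]. exists d; split; auto.
  intros y Hy. specialize (P r0 y ltac:(rewrite Rminus_diag_eq, Rabs_R0; auto) Hy).
  pose proof (snd_N1 (Csub (k r0 y) (k r0 t0))). unfold Csub in *; simpl in *. lra.
Qed.

Lemma C2_comp k u v t0 s0 : C2 k (u t0) (v t0) -> cont u t0 -> cont v t0 ->
  C2 (fun t _ => k (u t) (v t)) t0 s0.
Proof.
  intros Hk Hu Hv eps Heps. destruct (Hk eps Heps) as [d [Hd P]].
  destruct (Hu d Hd) as [d1 [Hd1 P1]]. destruct (Hv d Hd) as [d2 [Hd2 P2]].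
  exists (Rmin d1 d2); split; [apply Rmin_pos; auto|]. intros r t Hr Ht.
  pose proof (Rmin_l d1 d2); pose proof (Rmin_r d1 d2).
  apply P; [apply P1|apply P2]; lra.
Qed.

Lemma C2_ext k1 k2 r0 t0 : (forall r t, k1 r t = k2 r t) -> C2 k1 r0 t0 -> C2 k2 r0 t0.
Proof.
  intros E H eps Heps. destruct (H eps Heps) as [d [Hd P]]. exists d; split; auto.
  intros r t Hr Ht. rewrite <- !E. auto.
Qed.

Lemma C2_polar r0 t0 : C2 (fun r t => polar r t) r0 t0.
Proof.
  apply C2_ext with (k1 := fun r t => Cmul (r, 0) (Cexpi t)).
  - intros; unfold Cmul, Cexpi, polar; simpl; f_equal; ring.
  - apply C2_mul; [|apply C2_expi].
    intros eps Heps; exists eps; split; auto. intros r t Hr _.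
    unfold N1, Csub; simpl. replace (0 - 0) with 0 by ring; rewrite Rabs_R0; lra.
Qed.

Lemma C2_r r0 t0 : C2 (fun r _ => (r, 0)) r0 t0.
Proof.
  intros eps Heps; exists eps; split; auto. intros r t Hr _.
  unfold N1, Csub; simpl. replace (0 - 0) with 0 by ring; rewrite Rabs_R0; lra.
Qed.
Lemma C2_ir r0 t0 : C2 (fun r _ => (0, r)) r0 t0.
Proof.
  intros eps Heps; exists eps; split; auto. intros r t Hr _.
  unfold N1, Csub; simpl. replace (0 - 0) with 0 by ring; rewrite Rabs_R0; lra.
Qed.

Definition Elin (f : R -> R -> Cpx) (L : Cpx) r0 t0 r t :=
  Csub (Csub (f r t) (f r0 t0)) (Cmul L (Csub (polar r t) (polar r0 t0))).

Lemma hf_lin f (hf : polar_analytic f) r0 t0 : 0 < r0 ->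
  exists L, forall eps, 0 < eps -> exists d, 0 < d /\ d <= r0 /\
    forall r t, Rabs (r - r0) < d -> Rabs (t - t0) < d ->
      N1 (Elin f L r0 t0 r t) <= eps * N1 (Csub (polar r t) (polar r0 t0)).
Proof.
  intro Hr0. destruct (hf r0 t0 Hr0) as [L HL]. exists L. intros eps Heps.
  destruct (HL (eps/2)) as [d1 [Hd1 P]]; [lra|].
  exists (Rmin (Rmin (d1/2) 1) r0). 
  pose proof (Rmin_l (Rmin (d1/2) 1) r0); pose proof (Rmin_r (Rmin (d1/2) 1) r0).
  pose proof (Rmin_l (d1/2) 1); pose proof (Rmin_r (d1/2) 1).
  split; [repeat apply Rmin_pos; lra|]. split; [lra|].
  intros r t Hr Ht.
  assert (Hrp : 0 < r) by (apply Rabs_def2 in Hr; lra).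
  destruct (classic (r = r0 /\ t = t0)) as [[-> ->]|Hne].
  - assert (E : Elin f L r0 t0 r0 t0 = (0,0)) by (unfold Elin, Csub, Cmul; simpl; f_equal; ring).
    rewrite E. replace (N1 (0,0)) with 0 by (unfold N1; simpl; rewrite Rabs_R0; ring).
    pose proof (N1_ge0 (Csub (polar r0 t0) (polar r0 t0))). nra.
  - assert (Hpne : polar r t <> polar r0 t0).
    { intro E. apply Hne. apply polar_inj; auto; lra. }
    set (b := Csub (polar r t) (polar r0 t0)). set (a := Csub (f r t) (f r0 t0)).
    assert (Hb : b <> (0,0)).
    { intro E. apply Hpne. unfold b, Csub in E. destruct (polar r t), (polar r0 t0).
      simpl in E. injection E as E1 E2. f_equal; lra. }
    specialize (P r t Hrp Hpne).
    assert (Hs : sqrt ((r - r0) ^ 2 + (t - t0) ^ 2) < d1) by (pose proof (sqrt_le_sum (r - r0) (t - t0)); lra).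
    specialize (P Hs). fold a b in P.
    assert (E : Elin f L r0 t0 r t = Cmul (Csub (Cdiv a b) L) b).
    { unfold Elin. fold a b. pattern a at 1. rewrite <- (Cdiv_mul a b Hb).
      unfold Cmul, Csub; simpl; f_equal; ring. }
    rewrite E. eapply Rle_trans; [apply N1_mul|].
    pose proof (N1_Cnorm (Csub (Cdiv a b) L)). pose proof (N1_ge0 b).
    apply Rmult_le_compat_r; auto. lra.
Qed.

Lemma f_C2 f (hf : polar_analytic f) r0 t0 : 0 < r0 -> C2 f r0 t0.
Proof.
  intro Hr0. destruct (hf_lin f hf r0 t0 Hr0) as [L HL].
  destruct (HL 1) as [d [Hd [Hdr P]]]; [lra|].
  intros eps Heps. pose proof (N1_ge0 L).
  set (K := (N1 L + 1) * (2 + 2 * r0)).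
  assert (HK : 0 < K) by (unfold K; nra).
  exists (Rmin d (eps / (2 * K))). split; [apply Rmin_pos; [auto|apply Rdiv_lt_0_compat; lra]|].
  intros r t Hr Ht. pose proof (Rmin_l d (eps / (2 * K))); pose proof (Rmin_r d (eps / (2 * K))).
  specialize (P r t ltac:(lra) ltac:(lra)).
  set (dz := Csub (polar r t) (polar r0 t0)) in *.
  assert (E : Csub (f r t) (f r0 t0) = Cadd (Elin f L r0 t0 r t) (Cmul L dz))
    by (unfold Elin, Cadd, Csub, Cmul; fold dz; simpl; f_equal; ring).
  rewrite E. eapply Rle_lt_trans; [apply N1_add|].
  pose proof (N1_mul L dz). pose proof (polar_diff r t r0 t0 ltac:(lra)). fold dz in H3.
  pose proof (N1_ge0 dz).
  assert (N1 dz <= (2 + 2 * r0) * (eps / (2 * K))).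
  { pose proof (Rabs_pos (r - r0)); pose proof (Rabs_pos (t - t0)). nra. }
  assert ((N1 L + 1) * ((2 + 2 * r0) * (eps / (2 * K))) = eps / 2).
  { unfold K. field. split; nra. }
  nra.
Qed.

Definition IQr (h g : R -> R -> R) (x1 x2 y1 y2 : R) : R :=
  RInt (fun s => h s y1) x1 x2 + RInt (fun y => g x2 y) y1 y2
  - RInt (fun s => h s y2) x1 x2 - RInt (fun y => g x1 y) y1 y2.

Definition HG (h g : R -> R -> R) : Prop :=
  (forall s t, 0 < s -> continuous (fun x => h x t) s) /\
  (forall r t, 0 < r -> continuous (fun y => g r y) t).

Lemma exR_h h g t a b : HG h g -> 0 < a -> 0 < b -> ex_RInt (fun s => h s t) a b.
Proof.
  intros [H1 _] Ha Hb. apply (@ex_RInt_continuous R_CompleteNormedModule). intros z Hz. apply H1.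
  destruct Hz as [Hz _]. eapply Rlt_le_trans; [|apply Hz]. apply Rmin_case; auto.
Qed.

Lemma exR_g h g r c d : HG h g -> 0 < r -> ex_RInt (fun y => g r y) c d.
Proof. intros [_ H2] Hr. apply (@ex_RInt_continuous R_CompleteNormedModule). intros z _. apply H2; auto. Qed.

Lemma Chasles_R (f : R -> R) a b c : ex_RInt f a b -> ex_RInt f b c ->
  RInt f a b + RInt f b c = RInt f a c.
Proof. intros H1 H2. exact (@RInt_Chasles R_CompleteNormedModule f a b c H1 H2). Qed.

Lemma IQr_split h g x1 xm x2 y1 ym y2 : HG h g -> 0 < x1 -> 0 < xm -> 0 < x2 ->
  IQr h g x1 x2 y1 y2 = IQr h g x1 xm y1 ym + IQr h g xm x2 y1 ym
                      + IQr h g x1 xm ym y2 + IQr h g xm x2 ym y2.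
Proof.
  intros HH H1 Hm H2. unfold IQr.
  rewrite <- (Chasles_R (fun s => h s y1) x1 xm x2) by (apply (exR_h h g); auto).
  rewrite <- (Chasles_R (fun s => h s y2) x1 xm x2) by (apply (exR_h h g); auto).
  rewrite <- (Chasles_R (fun y => g x2 y) y1 ym y2) by (apply (exR_g h g); auto).
  rewrite <- (Chasles_R (fun y => g x1 y) y1 ym y2) by (apply (exR_g h g); auto).
  ring.
Qed.

Lemma RInt_bound (f : R -> R) a b c eta : ex_RInt f a b ->
  (forall t, Rmin a b <= t <= Rmax a b -> Rabs (f t - c) <= eta) ->
  Rabs (RInt f a b - c * (b - a)) <= eta * Rabs (b - a).
Proof.
  intros Hex Hb.
  assert (E : RInt (fun t => f t - c) a b = RInt f a b - (b - a) * c).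
  { pose proof (@RInt_minus R_CompleteNormedModule f (fun _ => c) a b Hex (ex_RInt_const a b c)) as E.
    rewrite RInt_const in E. exact E. }
  replace (RInt f a b - c * (b - a)) with (RInt (fun t => f t - c) a b) by (rewrite E; match goal with |- ?a = ?b => change (@eq R a b) end; ring).
  assert (Hex2 : ex_RInt (fun t => f t - c) a b).
  { apply (ex_RInt_minus f (fun _ => c)); auto. apply ex_RInt_const. }
  destruct (Rle_or_lt a b) as [Hab|Hab].
  - rewrite (Rabs_right (b - a)) by lra. rewrite Rmult_comm. apply abs_RInt_le_const; auto.
    intros t Ht. apply Hb. rewrite Rmin_left, Rmax_right; lra.
  - rewrite <- (opp_RInt_swap _ b a (ex_RInt_swap _ _ _ Hex2)). unfold opp; simpl. rewrite Rabs_Ropp.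
    rewrite (Rabs_left (b - a)) by lra. replace (- (b - a)) with (a - b) by ring.
    rewrite Rmult_comm. apply abs_RInt_le_const; [lra|apply ex_RInt_swap; auto|].
    intros t Ht. apply Hb. rewrite Rmin_right, Rmax_left; lra.
Qed.

Lemma abs_bnd x e : Rabs x <= e -> - e <= x <= e.
Proof. unfold Rabs; destruct (Rcase_abs x); lra. Qed.

Lemma IQr_bound h g x1 x2 y1 y2 eta1 eta2 : HG h g -> 0 < x1 -> x1 <= x2 -> y1 <= y2 ->
  (forall s y, x1 <= s <= x2 -> y1 <= y <= y2 -> Rabs (h s y) <= eta1) ->
  (forall r y, x1 <= r <= x2 -> y1 <= y <= y2 -> Rabs (g r y) <= eta2) ->
  Rabs (IQr h g x1 x2 y1 y2) <= 2 * eta1 * (x2 - x1) + 2 * eta2 * (y2 - y1).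
Proof.
  intros HH Hx1 Hx Hy Bh Bg.
  assert (K : forall (f : R -> R) a b eta, a <= b -> ex_RInt f a b ->
            (forall t, a <= t <= b -> Rabs (f t) <= eta) -> Rabs (RInt f a b) <= eta * (b - a)).
  { intros f0 a b eta Hab Hex Hf. pose proof (RInt_bound f0 a b 0 eta Hex) as Q.
    rewrite Rmult_0_l, Rminus_0_r, (Rabs_right (b - a)) in Q by lra. apply Q.
    intros t Ht. rewrite Rminus_0_r. apply Hf. rewrite Rmin_left, Rmax_right in Ht; lra. }
  unfold IQr.
  pose proof (K (fun s => h s y1) x1 x2 eta1 Hx ltac:(apply (exR_h h g); auto; lra)
     ltac:(intros; apply Bh; lra)).
  pose proof (K (fun s => h s y2) x1 x2 eta1 Hx ltac:(apply (exR_h h g); auto; lra)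
     ltac:(intros; apply Bh; lra)).
  pose proof (K (fun y => g x2 y) y1 y2 eta2 Hy ltac:(apply (exR_g h g); auto; lra)
     ltac:(intros; apply Bg; lra)).
  pose proof (K (fun y => g x1 y) y1 y2 eta2 Hy ltac:(apply (exR_g h g); auto; lra)
     ltac:(intros; apply Bg; lra)).
  set (A1 := RInt (fun s => h s y1) x1 x2) in *.
  set (A2 := RInt (fun s => h s y2) x1 x2) in *.
  set (A3 := RInt (fun y => g x2 y) y1 y2) in *.
  set (A4 := RInt (fun y => g x1 y) y1 y2) in *.
  apply abs_bnd in H, H0, H1, H2. apply Rabs_le. lra.
Qed.

Lemma RInt_plus_R (f g : R -> R) a b : ex_RInt f a b -> ex_RInt g a b ->
  RInt (fun x => f x + g x) a b = RInt f a b + RInt g a b.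
Proof. intros H1 H2. exact (@RInt_plus R_CompleteNormedModule f g a b H1 H2). Qed.

Lemma FTC_R (Phi phi : R -> R) a b :
  (forall x, Rmin a b <= x <= Rmax a b -> is_derive Phi x (phi x)) ->
  (forall x, Rmin a b <= x <= Rmax a b -> continuous phi x) ->
  RInt phi a b = Phi b - Phi a.
Proof.
  intros H1 H2. apply is_RInt_unique.
  exact (@is_RInt_derive R_CompleteNormedModule Phi phi a b H1 H2).
Qed.

Lemma IQr_add h g h1 g1 h2 g2 x1 x2 y1 y2 : HG h1 g1 -> HG h2 g2 ->
  (forall s t, h s t = h1 s t + h2 s t) -> (forall r t, g r t = g1 r t + g2 r t) ->
  0 < x1 -> 0 < x2 ->
  IQr h g x1 x2 y1 y2 = IQr h1 g1 x1 x2 y1 y2 + IQr h2 g2 x1 x2 y1 y2.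
Proof.
  intros H1 H2 Eh Eg Hx1 Hx2.
  assert (Eh' : h = fun s t => h1 s t + h2 s t).
  { apply functional_extensionality; intro s; apply functional_extensionality; intro t; apply Eh. }
  assert (Eg' : g = fun s t => g1 s t + g2 s t).
  { apply functional_extensionality; intro s; apply functional_extensionality; intro t; apply Eg. }
  subst h g. unfold IQr.
  rewrite (RInt_plus_R (fun s => h1 s y1) (fun s => h2 s y1) x1 x2
    (exR_h h1 g1 y1 x1 x2 H1 Hx1 Hx2) (exR_h h2 g2 y1 x1 x2 H2 Hx1 Hx2)).
  rewrite (RInt_plus_R (fun s => h1 s y2) (fun s => h2 s y2) x1 x2
    (exR_h h1 g1 y2 x1 x2 H1 Hx1 Hx2) (exR_h h2 g2 y2 x1 x2 H2 Hx1 Hx2)).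
  rewrite (RInt_plus_R (fun s => g1 x2 s) (fun s => g2 x2 s) y1 y2
    (exR_g h1 g1 x2 y1 y2 H1 Hx2) (exR_g h2 g2 x2 y1 y2 H2 Hx2)).
  rewrite (RInt_plus_R (fun s => g1 x1 s) (fun s => g2 x1 s) y1 y2
    (exR_g h1 g1 x1 y1 y2 H1 Hx1) (exR_g h2 g2 x1 y1 y2 H2 Hx1)).
  ring.
Qed.

Definition Ak (k : R -> R -> Cpx) r t : Cpx := Cmul (k r t) (Cexpi t).
Definition Bk (k : R -> R -> Cpx) r t : Cpx := Cmul (k r t) (Cmul (0, r) (Cexpi t)).


Definition klin (c0 L z0 : Cpx) r t : Cpx := Cadd c0 (Cmul L (Csub (polar r t) z0)).
Definition Phil (c0 L z0 : Cpx) r t : Cpx :=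
  let w := Csub (polar r t) z0 in
  Cadd (Cmul c0 (polar r t)) (Cmul (Cmul L w) (fst w / 2, snd w / 2)).

Ltac lin_tac :=
  intros; unfold Phil, Ak, Bk, klin, Cadd, Cmul, Csub, polar, Cexpi; simpl;
  first [apply (@ex_derive_continuous R_AbsRing R_NormedModule); auto_derive; auto
        | auto_derive; auto; field].

Lemma lin_rad1 c0 L z0 t a b :
  RInt (fun s => fst (Ak (klin c0 L z0) s t)) a b = fst (Phil c0 L z0 b t) - fst (Phil c0 L z0 a t).
Proof. apply (FTC_R (fun s => fst (Phil c0 L z0 s t))); lin_tac. Qed.
Lemma lin_rad2 c0 L z0 t a b :
  RInt (fun s => snd (Ak (klin c0 L z0) s t)) a b = snd (Phil c0 L z0 b t) - snd (Phil c0 L z0 a t).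
Proof. apply (FTC_R (fun s => snd (Phil c0 L z0 s t))); lin_tac. Qed.
Lemma lin_arc1 c0 L z0 r a b :
  RInt (fun t => fst (Bk (klin c0 L z0) r t)) a b = fst (Phil c0 L z0 r b) - fst (Phil c0 L z0 r a).
Proof. apply (FTC_R (fun t => fst (Phil c0 L z0 r t))); lin_tac. Qed.
Lemma lin_arc2 c0 L z0 r a b :
  RInt (fun t => snd (Bk (klin c0 L z0) r t)) a b = snd (Phil c0 L z0 r b) - snd (Phil c0 L z0 r a).
Proof. apply (FTC_R (fun t => snd (Phil c0 L z0 r t))); lin_tac. Qed.

Lemma IQr_lin1 c0 L z0 x1 x2 y1 y2 :
  IQr (fun r t => fst (Ak (klin c0 L z0) r t)) (fun r t => fst (Bk (klin c0 L z0) r t)) x1 x2 y1 y2 = 0.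
Proof. unfold IQr. rewrite !lin_rad1, !lin_arc1. ring. Qed.
Lemma IQr_lin2 c0 L z0 x1 x2 y1 y2 :
  IQr (fun r t => snd (Ak (klin c0 L z0) r t)) (fun r t => snd (Bk (klin c0 L z0) r t)) x1 x2 y1 y2 = 0.
Proof. unfold IQr. rewrite !lin_rad2, !lin_arc2. ring. Qed.

Lemma pow2_pos n : 0 < 2 ^ n.
Proof. apply pow_lt; lra. Qed.

Lemma half_step c n : c / 2 ^ S n + c / 2 ^ S n = c / 2 ^ n.
Proof. simpl. pose proof (pow2_pos n). field. lra. Qed.

Lemma pow2_ge_INR n : INR n < 2 ^ n.
Proof.
  induction n; [simpl; lra|]. rewrite S_INR. simpl pow. pose proof (pow2_pos n).
  assert (1 <= 2 ^ n) by (apply pow_R1_Rle; lra). lra.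
Qed.

Lemma small_pow c d : 0 < d -> exists n, c / 2 ^ n < d.
Proof.
  intro Hd. destruct (INR_unbounded (c / d)) as [n Hn]. exists n.
  pose proof (pow2_ge_INR n). pose proof (pow2_pos n).
  apply Rmult_lt_reg_r with (2 ^ n); auto. unfold Rdiv; rewrite Rmult_assoc, Rinv_l by lra.
  rewrite Rmult_1_r. assert (c / d * d = c) by (field; lra).
  assert (c / d * d < INR n * d) by (apply Rmult_lt_compat_r; lra). nra.
Qed.

Lemma nested_lim (u : nat -> R) c : 0 < c ->
  (forall n, u n <= u (S n)) -> (forall n, u (S n) + c / 2 ^ S n <= u n + c / 2 ^ n) ->
  exists X, forall n, u n <= X <= u n + c / 2 ^ n.
Proof.
  intros Hc H1 H2.
  assert (K : forall k n : nat, u n <= u (n + k)%nat /\ u (n + k)%nat + c / 2 ^ (n + k)%nat <= u n + c / 2 ^ n).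
  { induction k; intro n. - rewrite Nat.add_0_r; lra.
    - rewrite Nat.add_succ_r. destruct (IHk n). specialize (H1 (n + k)%nat). specialize (H2 (n + k)%nat). lra. }
  assert (B : forall n m, u m <= u n + c / 2 ^ n).
  { intros n m. destruct (Nat.le_ge_cases n m) as [Hnm|Hnm].
    - destruct (Nat.le_exists_sub n m Hnm) as [k [-> _]]. rewrite Nat.add_comm.
      destruct (K k n). assert (0 < c / 2 ^ (n + k)) by (apply Rdiv_lt_0_compat; auto; apply pow2_pos). lra.
    - destruct (Nat.le_exists_sub m n Hnm) as [k [-> _]]. rewrite Nat.add_comm.
      destruct (K k m). assert (0 < c / 2 ^ (m + k)) by (apply Rdiv_lt_0_compat; auto; apply pow2_pos). lra. }
  destruct (completeness (fun x => exists m, x = u m)) as [X [HX1 HX2]].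
  - exists (u 0%nat + c / 2 ^ 0). intros x [m ->]. apply B.
  - exists (u 0%nat); exists 0%nat; auto.
  - exists X. intro n. split.
    + apply HX1. exists n; auto.
    + apply HX2. intros x [m ->]. apply B.
Qed.

Section Quad.
Variables (P : R -> R -> nat -> Prop) (x0 y0 W H : R).

Definition inside x y n := x0 <= x /\ x + W / 2 ^ n <= x0 + W /\ y0 <= y /\ y + H / 2 ^ n <= y0 + H.

Definition qnext n (p : R * R) : R * R :=
  let x := fst p in let y := snd p in
  let w := W / 2 ^ S n in let h := H / 2 ^ S n in
  if excluded_middle_informative (P x y (S n)) then
    if excluded_middle_informative (P (x + w) y (S n)) then
      if excluded_middle_informative (P x (y + h) (S n)) then (x + w, y + h) else (x, y + h)
    else (x + w, y)
  else (x, y).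

Fixpoint qseq n : R * R := match n with O => (x0, y0) | S m => qnext m (qseq m) end.

Lemma qnext_cases n p :
  (fst (qnext n p) = fst p \/ fst (qnext n p) = fst p + W / 2 ^ S n) /\
  (snd (qnext n p) = snd p \/ snd (qnext n p) = snd p + H / 2 ^ S n).
Proof.
  unfold qnext.
  destruct (excluded_middle_informative _); [destruct (excluded_middle_informative _);
    [destruct (excluded_middle_informative _)|]|]; simpl; tauto.
Qed.

Hypothesis HW : 0 < W.
Hypothesis HH : 0 < H.
Hypothesis Hstep : forall x y n, inside x y n -> P x y (S n) -> P (x + W / 2 ^ S n) y (S n) ->
  P x (y + H / 2 ^ S n) (S n) -> P (x + W / 2 ^ S n) (y + H / 2 ^ S n) (S n) -> P x y n.
Hypothesis Hloc : forall X Y, x0 <= X <= x0 + W -> y0 <= Y <= y0 + H ->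
  exists d, 0 < d /\ forall x y n, inside x y n -> x <= X <= x + W / 2 ^ n -> y <= Y <= y + H / 2 ^ n ->
    W / 2 ^ n < d -> H / 2 ^ n < d -> P x y n.

Lemma quad : P x0 y0 0.
Proof.
  apply NNPP. intro Hn0.
  assert (Wp : forall n, 0 < W / 2 ^ n) by (intro n; apply Rdiv_lt_0_compat; auto; apply pow2_pos).
  assert (Hp : forall n, 0 < H / 2 ^ n) by (intro n; apply Rdiv_lt_0_compat; auto; apply pow2_pos).
  assert (Inv : forall n, inside (fst (qseq n)) (snd (qseq n)) n /\ ~ P (fst (qseq n)) (snd (qseq n)) n).
  { induction n.
    - simpl. split; auto. unfold inside. simpl. rewrite !Rdiv_1_r. lra.
    - destruct IHn as [Hin HnP]. simpl qseq.
      set (x := fst (qseq n)) in *. set (y := snd (qseq n)) in *.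
      pose proof (half_step W n). pose proof (half_step H n).
      pose proof (Wp (S n)). pose proof (Hp (S n)).
      destruct Hin as [I1 [I2 [I3 I4]]].
      unfold qnext. fold x y.
      destruct (excluded_middle_informative (P x y (S n))) as [P1|P1].
      + destruct (excluded_middle_informative (P (x + W / 2 ^ S n) y (S n))) as [P2|P2].
        * destruct (excluded_middle_informative (P x (y + H / 2 ^ S n) (S n))) as [P3|P3].
          -- cbn [fst snd]. split; [unfold inside; lra|]. intro P4. apply HnP.
             apply Hstep; auto. unfold inside; lra.
          -- cbn [fst snd]. split; [unfold inside; lra|auto].
        * cbn [fst snd]. split; [unfold inside; lra|auto].
      + cbn [fst snd]. split; [unfold inside; lra|auto]. }
  destruct (nested_lim (fun n => fst (qseq n)) W HW) as [X HX].
  { intro n. cbn [qseq]. destruct (qnext_cases n (qseq n)) as [[E|E] _]; rewrite E; pose proof (Wp (S n)); lra. }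
  { intro n. cbn [qseq]. pose proof (half_step W n). destruct (qnext_cases n (qseq n)) as [[E|E] _]; rewrite E; pose proof (Wp (S n)); lra. }
  destruct (nested_lim (fun n => snd (qseq n)) H HH) as [Y HY].
  { intro n. cbn [qseq]. destruct (qnext_cases n (qseq n)) as [_ [E|E]]; rewrite E; pose proof (Hp (S n)); lra. }
  { intro n. cbn [qseq]. pose proof (half_step H n). destruct (qnext_cases n (qseq n)) as [_ [E|E]]; rewrite E; pose proof (Hp (S n)); lra. }
  destruct (Hloc X Y) as [d [Hd Pd]].
  { specialize (HX 0%nat). simpl in HX. rewrite Rdiv_1_r in HX. lra. }
  { specialize (HY 0%nat). simpl in HY. rewrite Rdiv_1_r in HY. lra. }
  destruct (small_pow (W + H) d Hd) as [n Hn].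
  assert (W / 2 ^ n < d) by (unfold Rdiv in *; pose proof (Hp n); unfold Rdiv in H0; nra).
  assert (H / 2 ^ n < d) by (unfold Rdiv in *; pose proof (Wp n); unfold Rdiv in H1; nra).
  destruct (Inv n) as [Hin HnP]. apply HnP. apply Pd; auto.
Qed.
End Quad.

Definition sel (b : bool) (z : Cpx) : R := if b then fst z else snd z.

Lemma sel_N1 b z : Rabs (sel b z) <= N1 z.
Proof. destruct b; simpl; [apply fst_N1|apply snd_N1]. Qed.

Lemma sel_add b z w : sel b (Cadd z w) = sel b z + sel b w.
Proof. destruct b; reflexivity. Qed.

Lemma C2_cont_sel b k r0 t0 : C2 k r0 t0 -> continuous (fun r => sel b (k r t0)) r0.
Proof. intro H; apply cont_continuous; destruct b; simpl; [apply (C2_fst k)|apply (C2_snd k)]; auto. Qed.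
Lemma C2_cont_sel2 b k r0 t0 : C2 k r0 t0 -> continuous (fun t => sel b (k r0 t)) t0.
Proof. intro H; apply cont_continuous; destruct b; simpl; [apply (C2_fst2 k)|apply (C2_snd2 k)]; auto. Qed.

Lemma C2_Ak k r t : C2 k r t -> C2 (Ak k) r t.
Proof. intro H. unfold Ak. apply (C2_mul k (fun _ t => Cexpi t)); auto. apply C2_expi. Qed.
Lemma C2_Bk k r t : C2 k r t -> C2 (Bk k) r t.
Proof.
  intro H. unfold Bk. apply (C2_mul k (fun r t => Cmul (0, r) (Cexpi t))); auto.
  apply (C2_mul (fun r _ => (0, r)) (fun _ t => Cexpi t)); [apply C2_ir|apply C2_expi].
Qed.

Lemma HG_of b k : (forall r t, 0 < r -> C2 k r t) ->
  HG (fun r t => sel b (Ak k r t)) (fun r t => sel b (Bk k r t)).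
Proof.
  intro H. split.
  - intros s t Hs. apply C2_cont_sel. apply C2_Ak; auto.
  - intros r t Hr. apply C2_cont_sel2. apply C2_Bk; auto.
Qed.

Lemma C2_klin c0 L z0 r t : C2 (klin c0 L z0) r t.
Proof.
  unfold klin. apply (C2_add (fun _ _ => c0)); [apply C2_const|].
  apply (C2_mul (fun _ _ => L)); [apply C2_const|].
  apply (C2_sub (fun r t => polar r t) (fun _ _ => z0)); [apply C2_polar|apply C2_const].
Qed.

Lemma IQr_lin_sel b c0 L z0 x1 x2 y1 y2 :
  IQr (fun r t => sel b (Ak (klin c0 L z0) r t)) (fun r t => sel b (Bk (klin c0 L z0) r t)) x1 x2 y1 y2 = 0.
Proof. destruct b; [apply IQr_lin1|apply IQr_lin2]. Qed.

Lemma N1_expi t : N1 (Cexpi t) <= 2.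
Proof.
  unfold N1, Cexpi; simpl.
  assert (Rabs (cos t) <= 1) by (apply Rabs_le; pose proof (COS_bound t); lra).
  assert (Rabs (sin t) <= 1) by (apply Rabs_le; pose proof (SIN_bound t); lra). lra.
Qed.

Lemma zero_of_small a C : 0 < C -> (forall eps, 0 < eps -> Rabs a <= eps * C) -> a = 0.
Proof.
  intros HC Ha. destruct (Req_dec a 0) as [|Hn]; auto. exfalso.
  assert (Hp : 0 < Rabs a) by (apply Rabs_pos_lt; auto).
  specialize (Ha (Rabs a / (2 * C)) ltac:(apply Rdiv_lt_0_compat; lra)).
  assert (Rabs a / (2 * C) * C = Rabs a / 2) by (field; lra). lra.
Qed.

Lemma RInt_swap_R (f : R -> R) a b : ex_RInt f a b -> - RInt f a b = RInt f b a.
Proof. intro H. exact (@opp_RInt_swap R_CompleteNormedModule f a b H). Qed.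

Section Goursat.
Variable f : R -> R -> Cpx.
Hypothesis hf : polar_analytic f.

Lemma goursat_rect b x1 x2 y1 y2 : 0 < x1 -> x1 < x2 -> y1 < y2 ->
  IQr (fun r t => sel b (Ak f r t)) (fun r t => sel b (Bk f r t)) x1 x2 y1 y2 = 0.
Proof.
  intros Hx1 Hx Hy.
  set (h := fun r t => sel b (Ak f r t)). set (g := fun r t => sel b (Bk f r t)).
  assert (HGf : HG h g) by (apply HG_of; intros; apply f_C2; auto).
  set (W := x2 - x1). set (H := y2 - y1).
  assert (HW : 0 < W) by (unfold W; lra). assert (HH : 0 < H) by (unfold H; lra).
  apply zero_of_small with (C := W * H); [nra|]. intros eps Heps.
  set (P := fun x y n => Rabs (IQr h g x (x + W / 2 ^ n) y (y + H / 2 ^ n)) <= eps * (W / 2 ^ n) * (H / 2 ^ n)).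
  assert (Q : P x1 y1 0%nat).
  2:{ unfold P in Q. rewrite !pow_O, !Rdiv_1_r in Q.
      replace (x1 + W) with x2 in Q by (unfold W; ring). replace (y1 + H) with y2 in Q by (unfold H; ring).
      lra. }
  apply (quad P x1 y1 W H HW HH).
  - intros x y n [I1 [I2 [I3 I4]]] P1 P2 P3 P4. unfold P in *.
    pose proof (half_step W n) as EW. pose proof (half_step H n) as EH.
    set (w := W / 2 ^ S n) in *. set (hh := H / 2 ^ S n) in *.
    rewrite <- EW, <- EH.
    assert (0 < w) by (apply Rdiv_lt_0_compat; auto; apply pow2_pos).
    assert (0 < hh) by (apply Rdiv_lt_0_compat; auto; apply pow2_pos).
    replace (x + (w + w)) with (x + w + w) by ring. replace (y + (hh + hh)) with (y + hh + hh) by ring.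
    rewrite (IQr_split h g x (x + w) (x + w + w) y (y + hh) (y + hh + hh)) by (auto; lra).
    pose proof (Rabs_triang (IQr h g x (x + w) y (y + hh) + IQr h g (x + w) (x + w + w) y (y + hh) +
      IQr h g x (x + w) (y + hh) (y + hh + hh)) (IQr h g (x + w) (x + w + w) (y + hh) (y + hh + hh))).
    pose proof (Rabs_triang (IQr h g x (x + w) y (y + hh) + IQr h g (x + w) (x + w + w) y (y + hh))
      (IQr h g x (x + w) (y + hh) (y + hh + hh))).
    pose proof (Rabs_triang (IQr h g x (x + w) y (y + hh)) (IQr h g (x + w) (x + w + w) y (y + hh))).
    nra.
  - intros X Y HX HY.
    assert (HX0 : 0 < X) by lra.
    destruct (hf_lin f hf X Y HX0) as [L HL].
    set (K := (W + x2 * H) ^ 2).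
    assert (HK : 0 < K) by (unfold K; apply pow_lt; nra).
    set (e' := eps * W * H / (8 * K)).
    assert (He' : 0 < e') by (unfold e'; apply Rdiv_lt_0_compat; [repeat apply Rmult_lt_0_compat; lra|lra]).
    destruct (HL e' He') as [d [Hd [HdX Pd]]].
    exists d; split; auto.
    intros x y n [I1 [I2 [I3 I4]]] [Xa Xb] [Ya Yb] Hwd Hhd. unfold P.
    assert (Hq : 0 < / 2 ^ n) by (apply Rinv_0_lt_compat; apply pow2_pos).
    assert (Ew : W / 2 ^ n = W * / 2 ^ n) by reflexivity.
    assert (Eh : H / 2 ^ n = H * / 2 ^ n) by reflexivity.
    set (q := / 2 ^ n) in *.
    set (w := W / 2 ^ n) in *. set (hh := H / 2 ^ n) in *.
    assert (Hw : 0 < w) by (rewrite Ew; nra). assert (Hh : 0 < hh) by (rewrite Eh; nra).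
    set (c0 := f X Y). set (z0 := polar X Y).
    set (E := fun r t => Elin f L X Y r t).
    assert (HGE : HG (fun r t => sel b (Ak E r t)) (fun r t => sel b (Bk E r t))).
    { apply HG_of. intros r t Hr. unfold E, Elin.
      apply (C2_sub (fun r t => Csub (f r t) (f X Y)) (fun r t => Cmul L (Csub (polar r t) (polar X Y)))).
      - apply (C2_sub f (fun _ _ => f X Y)); [apply f_C2; auto|apply C2_const].
      - apply (C2_mul (fun _ _ => L)); [apply C2_const|].
        apply (C2_sub (fun r t => polar r t) (fun _ _ => polar X Y)); [apply C2_polar|apply C2_const]. }
    rewrite (IQr_add h g (fun r t => sel b (Ak (klin c0 L z0) r t)) (fun r t => sel b (Bk (klin c0 L z0) r t))
      (fun r t => sel b (Ak E r t)) (fun r t => sel b (Bk E r t))); try lra.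
    2:{ apply HG_of. intros; apply C2_klin. }
    2:{ exact HGE. }
    2:{ intros s t. unfold h, E, Elin, c0, z0, klin. destruct b; unfold Ak, Cmul, Cadd, Csub; simpl; ring. }
    2:{ intros s t. unfold g, E, Elin, c0, z0, klin. destruct b; unfold Bk, Cmul, Cadd, Csub; simpl; ring. }
    rewrite IQr_lin_sel, Rplus_0_l.
    set (A := 2 * w + 2 * x2 * hh).
    assert (HNE : forall s t, x <= s <= x + w -> y <= t <= y + hh -> N1 (E s t) <= e' * A).
    { intros s t Hs Ht. unfold E. eapply Rle_trans; [apply Pd|].
      - apply Rabs_def1; lra.
      - apply Rabs_def1; lra.
      - apply Rmult_le_compat_l; [lra|]. eapply Rle_trans; [apply polar_diff; lra|].
        unfold A. assert (Rabs (s - X) <= w) by (apply Rabs_le; lra).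
        assert (Rabs (t - Y) <= hh) by (apply Rabs_le; lra).
        pose proof (Rabs_pos (t - Y)). assert (X <= x2) by (unfold W in HX; lra). nra. }
    eapply Rle_trans; [apply (IQr_bound _ _ x (x + w) y (y + hh) (2 * (e' * A)) (2 * x2 * (e' * A))); auto; try lra|].
    + intros s t Hs Ht. eapply Rle_trans; [apply sel_N1|]. unfold Ak.
      eapply Rle_trans; [apply N1_mul|]. pose proof (N1_expi t). pose proof (HNE s t Hs Ht).
      pose proof (N1_ge0 (E s t)). nra.
    + intros s t Hs Ht. eapply Rle_trans; [apply sel_N1|]. unfold Bk.
      eapply Rle_trans; [apply N1_mul|]. pose proof (N1_mul (0, s) (Cexpi t)).
      assert (N1 (0, s) <= x2) by (assert (x1 + W = x2) by (unfold W; ring); unfold N1; simpl; rewrite Rabs_R0, Rabs_right; lra).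
      pose proof (N1_expi t). pose proof (HNE s t Hs Ht).
      pose proof (N1_ge0 (E s t)). pose proof (N1_ge0 (Cmul (0, s) (Cexpi t))).
      pose proof (N1_ge0 (0, s)). pose proof (N1_ge0 (Cexpi t)).
      assert (N1 (Cmul (0, s) (Cexpi t)) <= 2 * x2) by nra. nra.
    + replace (x + w - x) with w by ring. replace (y + hh - y) with hh by ring.
      assert (Eq : 2 * (2 * (e' * A)) * w + 2 * (2 * x2 * (e' * A)) * hh = eps * w * hh).
      { unfold A, e', K. rewrite Ew, Eh. field. nra. }
      lra.
Qed.

Lemma goursat_all b x1 x2 y1 y2 : 0 < x1 -> 0 < x2 ->
  IQr (fun r t => sel b (Ak f r t)) (fun r t => sel b (Bk f r t)) x1 x2 y1 y2 = 0.
Proof.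
  intros H1 H2.
  assert (HGf : HG (fun r t => sel b (Ak f r t)) (fun r t => sel b (Bk f r t)))
    by (apply HG_of; intros; apply f_C2; auto).
  set (h := fun r t => sel b (Ak f r t)) in *. set (g := fun r t => sel b (Bk f r t)) in *.
  assert (Ry : forall a c d, 0 < a -> c < d -> IQr h g a a c d = 0 /\ forall e, 0 < e -> a < e -> IQr h g a e c d = 0).
  { intros a c d Ha Hcd. split.
    - unfold IQr. rewrite !RInt_point. change (@zero R_AbelianGroup) with 0. ring.
    - intros e He Hae. apply goursat_rect; auto. }
  assert (Ey : forall x1 x2 y, IQr h g x1 x2 y y = 0).
  { intros. unfold IQr. rewrite !(RInt_point y). change (@zero R_AbelianGroup) with 0. ring. }
  assert (Sx : forall x1 x2 y1 y2, 0 < x1 -> 0 < x2 -> IQr h g x2 x1 y1 y2 = - IQr h g x1 x2 y1 y2).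
  { intros a c d e Ha Hc. unfold IQr.
    rewrite <- (RInt_swap_R (fun s => h s d) a c) by (apply (exR_h h g); auto).
    rewrite <- (RInt_swap_R (fun s => h s e) a c) by (apply (exR_h h g); auto). ring. }
  assert (Sy : forall x1 x2 y1 y2, 0 < x1 -> 0 < x2 -> IQr h g x1 x2 y2 y1 = - IQr h g x1 x2 y1 y2).
  { intros a c d e Ha Hc. unfold IQr.
    rewrite <- (RInt_swap_R (fun s => g a s) d e) by (apply (exR_g h g); auto).
    rewrite <- (RInt_swap_R (fun s => g c s) d e) by (apply (exR_g h g); auto). ring. }
  destruct (Rtotal_order y1 y2) as [Hy|[Hy|Hy]].
  - destruct (Rtotal_order x1 x2) as [Hx|[Hx|Hx]].
    + unfold h, g; apply goursat_rect; auto.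
    + subst. apply (proj1 (Ry x2 y1 y2 H2 Hy)).
    + rewrite Sx by auto. unfold h, g; rewrite goursat_rect; auto; lra.
  - subst; apply Ey.
  - rewrite Sy by auto.
    destruct (Rtotal_order x1 x2) as [Hx|[Hx|Hx]].
    + unfold h, g; rewrite goursat_rect; auto; lra.
    + subst. rewrite (proj1 (Ry x2 y2 y1 H2 Hy)). lra.
    + rewrite Sx by auto. unfold h, g; rewrite goursat_rect; auto; lra.
Qed.
End Goursat.

Section Prim.
Variable f : R -> R -> Cpx.
Hypothesis hf : polar_analytic f.

Definition Fs b r t : R :=
  RInt (fun s => sel b (Ak f s 0)) 1 r + RInt (fun y => sel b (Bk f r y)) 0 t.

Lemma HGf b : HG (fun r t => sel b (Ak f r t)) (fun r t => sel b (Bk f r t)).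
Proof. apply HG_of; intros; apply f_C2; auto. Qed.

Lemma Fs_diff_eq b r0 t0 r t : 0 < r0 -> 0 < r ->
  Fs b r t - Fs b r0 t0 = RInt (fun y => sel b (Bk f r0 y)) t0 t + RInt (fun s => sel b (Ak f s t)) r0 r.
Proof.
  intros H0 H1. pose proof (goursat_all f hf b r0 r 0 t H0 H1) as Gs. unfold IQr in Gs.
  unfold Fs.
  pose proof (Chasles_R (fun s => sel b (Ak f s 0)) 1 r0 r
    ltac:(apply (exR_h _ _ _ _ _ (HGf b)); lra) ltac:(apply (exR_h _ _ _ _ _ (HGf b)); lra)).
  pose proof (Chasles_R (fun y => sel b (Bk f r0 y)) 0 t0 t
    ltac:(apply (exR_g _ _ _ _ _ (HGf b)); lra) ltac:(apply (exR_g _ _ _ _ _ (HGf b)); lra)).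
  cbv beta in *. lra.
Qed.

Lemma sel_sub b x y : sel b (Csub x y) = sel b x - sel b y.
Proof. destruct b; reflexivity. Qed.

Lemma Fs_diff b r0 t0 : 0 < r0 ->
  differentiable_pt_lim (Fs b) r0 t0 (sel b (Ak f r0 t0)) (sel b (Bk f r0 t0)).
Proof.
  intros H0 eps.
  assert (He : 0 < eps / 2) by (destruct eps; simpl; lra).
  destruct (C2_Ak f r0 t0 (f_C2 f hf r0 t0 H0) (eps / 2) He) as [d1 [Hd1 P1]].
  destruct (C2_Bk f r0 t0 (f_C2 f hf r0 t0 H0) (eps / 2) He) as [d2 [Hd2 P2]].
  assert (Hd : 0 < Rmin (Rmin d1 d2) (r0 / 2)) by (repeat apply Rmin_pos; lra).
  exists (mkposreal _ Hd). simpl. intros u v Hu Hv.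
  pose proof (Rmin_l (Rmin d1 d2) (r0 / 2)); pose proof (Rmin_r (Rmin d1 d2) (r0 / 2)).
  pose proof (Rmin_l d1 d2); pose proof (Rmin_r d1 d2).
  assert (Hu0 : 0 < u) by (apply Rabs_def2 in Hu; lra).
  rewrite Fs_diff_eq by auto.
  pose proof (RInt_bound (fun y => sel b (Bk f r0 y)) t0 v (sel b (Bk f r0 t0)) (eps / 2)
    (exR_g _ _ _ _ _ (HGf b) H0)) as B1.
  pose proof (RInt_bound (fun s => sel b (Ak f s v)) r0 u (sel b (Ak f r0 t0)) (eps / 2)
    (exR_h _ _ _ _ _ (HGf b) H0 Hu0)) as B2.
  assert (Q1 : Rabs (RInt (fun y => sel b (Bk f r0 y)) t0 v - sel b (Bk f r0 t0) * (v - t0)) <= eps / 2 * Rabs (v - t0)).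
  { apply B1. intros y Hy. rewrite <- sel_sub. eapply Rle_trans; [apply sel_N1|].
    left. apply P2; [rewrite Rminus_diag_eq, Rabs_R0 by auto; lra|].
    apply Rle_lt_trans with (Rabs (v - t0)); [|lra].
    revert Hy; apply Rmin_case_strong; apply Rmax_case_strong; intros; apply Rabs_le;
    apply Rabs_def2 in Hv; unfold Rabs; destruct (Rcase_abs (v - t0)); lra. }
  assert (Q2 : Rabs (RInt (fun s => sel b (Ak f s v)) r0 u - sel b (Ak f r0 t0) * (u - r0)) <= eps / 2 * Rabs (u - r0)).
  { apply B2. intros s Hs. rewrite <- sel_sub. eapply Rle_trans; [apply sel_N1|].
    left. apply P1; [|lra].
    apply Rle_lt_trans with (Rabs (u - r0)); [|lra].
    revert Hs; apply Rmin_case_strong; apply Rmax_case_strong; intros; apply Rabs_le;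
    unfold Rabs; destruct (Rcase_abs (u - r0)); lra. }
  set (A1 := RInt (fun y => sel b (Bk f r0 y)) t0 v) in *.
  set (A2 := RInt (fun s => sel b (Ak f s v)) r0 u) in *.
  replace (A1 + A2 - (sel b (Ak f r0 t0) * (u - r0) + sel b (Bk f r0 t0) * (v - t0)))
    with ((A1 - sel b (Bk f r0 t0) * (v - t0)) + (A2 - sel b (Ak f r0 t0) * (u - r0))) by ring.
  eapply Rle_trans; [apply Rabs_triang|].
  pose proof (Rmax_l (Rabs (u - r0)) (Rabs (v - t0))). pose proof (Rmax_r (Rabs (u - r0)) (Rabs (v - t0))).
  destruct eps as [e Hep]; simpl in *. nra.
Qed.
End Prim.

Definition cl (u v t : R) : R := Rmax u (Rmin t v).

Lemma cl_in u v t : u <= v -> u <= cl u v t <= v.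
Proof. intro H. unfold cl, Rmax, Rmin. repeat destruct Rle_dec; lra. Qed.
Lemma cl_id u v t : u <= t <= v -> cl u v t = t.
Proof. intro H. unfold cl, Rmax, Rmin. repeat destruct Rle_dec; lra. Qed.
Lemma cl_lip u v s t : u <= v -> Rabs (cl u v s - cl u v t) <= Rabs (s - t).
Proof.
  intro H. unfold cl, Rmax, Rmin. repeat destruct Rle_dec; unfold Rabs;
  repeat destruct Rcase_abs; lra.
Qed.

Definition within_cont (g : R -> R) u v t :=
  forall eps, 0 < eps -> exists d, 0 < d /\ forall s, u <= s <= v -> Rabs (s - t) < d -> Rabs (g s - g t) < eps.

Lemma cont_cl g u v : u <= v -> (forall t, u <= t <= v -> within_cont g u v t) ->
  forall t, cont (fun x => g (cl u v x)) t.
Proof.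
  intros Huv Hw t eps Heps. destruct (Hw (cl u v t) (cl_in u v t Huv) eps Heps) as [d [Hd P]].
  exists d; split; auto. intros y Hy. apply P; [apply cl_in; auto|].
  eapply Rle_lt_trans; [apply cl_lip; auto|auto].
Qed.

Lemma deriv_within_cont g dg u v t : u <= t <= v ->
  (forall eps, 0 < eps -> exists delta, 0 < delta /\
     forall s, u <= s <= v -> s <> t -> Rabs (s - t) < delta -> Rabs ((g s - g t) / (s - t) - dg t) < eps) ->
  within_cont g u v t.
Proof.
  intros Ht Hd eps Heps. destruct (Hd 1 ltac:(lra)) as [d1 [Hd1 P]].
  set (K := Rabs (dg t) + 1). assert (HK : 0 < K) by (unfold K; pose proof (Rabs_pos (dg t)); lra).
  exists (Rmin d1 (eps / K)). split; [apply Rmin_pos; [auto|apply Rdiv_lt_0_compat; lra]|].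
  intros s Hs Hst. pose proof (Rmin_l d1 (eps / K)); pose proof (Rmin_r d1 (eps / K)).
  destruct (Req_dec s t) as [->|Hne].
  - rewrite Rminus_diag_eq, Rabs_R0 by auto; auto.
  - specialize (P s Hs Hne ltac:(lra)).
    assert (Hst0 : 0 < Rabs (s - t)) by (apply Rabs_pos_lt; lra).
    assert (E : g s - g t = ((g s - g t) / (s - t) - dg t) * (s - t) + dg t * (s - t)) by (field; lra).
    rewrite E. eapply Rle_lt_trans; [apply Rabs_triang|]. rewrite !Rabs_mult.
    assert (Rabs (s - t) * K < eps).
    { apply Rmult_lt_reg_r with (/ K); [apply Rinv_0_lt_compat; auto|].
      rewrite Rmult_assoc, Rinv_r, Rmult_1_r by lra. unfold Rdiv in *; lra. }
    unfold K in *. nra.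
Qed.

Lemma interior_deriv g dg u v t : u < t < v ->
  (forall eps, 0 < eps -> exists delta, 0 < delta /\
     forall s, u <= s <= v -> s <> t -> Rabs (s - t) < delta -> Rabs ((g s - g t) / (s - t) - dg t) < eps) ->
  derivable_pt_lim (fun x => g (cl u v x)) t (dg t).
Proof.
  intros Ht Hder eps Heps. destruct (Hder eps Heps) as [d1 [Hd1 P]].
  assert (Hd : 0 < Rmin d1 (Rmin (t - u) (v - t))) by (repeat apply Rmin_pos; lra).
  exists (mkposreal _ Hd). simpl. intros h Hh Hhd.
  pose proof (Rmin_l d1 (Rmin (t - u) (v - t))); pose proof (Rmin_r d1 (Rmin (t - u) (v - t))).
  pose proof (Rmin_l (t - u) (v - t)); pose proof (Rmin_r (t - u) (v - t)).
  apply Rabs_def2 in Hhd as Hh2.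
  rewrite (cl_id u v (t + h)) by lra. rewrite (cl_id u v t) by lra.
  replace h with ((t + h) - t) at 2 by ring.
  apply P; [lra|lra|]. replace (t + h - t) with h by ring. lra.
Qed.

Lemma diff_cont F x y lx ly : differentiable_pt_lim F x y lx ly ->
  forall eps, 0 < eps -> exists d, 0 < d /\ forall a b, Rabs (a - x) < d -> Rabs (b - y) < d -> Rabs (F a b - F x y) < eps.
Proof.
  intros HF eps Heps. destruct (HF (mkposreal 1 Rlt_0_1)) as [d0 P]. simpl in P.
  set (K := Rabs lx + Rabs ly + 1). assert (HK : 0 < K) by (unfold K; pose proof (Rabs_pos lx); pose proof (Rabs_pos ly); lra).
  exists (Rmin d0 (eps / (2 * K))). split; [apply Rmin_pos; [destruct d0; auto|apply Rdiv_lt_0_compat; lra]|].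
  intros a b Ha Hb. pose proof (Rmin_l d0 (eps / (2 * K))); pose proof (Rmin_r d0 (eps / (2 * K))).
  specialize (P a b ltac:(lra) ltac:(lra)).
  replace (F a b - F x y) with ((F a b - F x y - (lx * (a - x) + ly * (b - y))) + (lx * (a - x) + ly * (b - y))) by ring.
  eapply Rle_lt_trans; [apply Rabs_triang|].
  pose proof (Rabs_triang (lx * (a - x)) (ly * (b - y))). rewrite !Rabs_mult in H1.
  assert (Rmax (Rabs (a - x)) (Rabs (b - y)) < eps / (2 * K)) by (apply Rmax_lub_lt; lra).
  pose proof (Rabs_pos (a - x)); pose proof (Rabs_pos (b - y)); pose proof (Rabs_pos lx); pose proof (Rabs_pos ly).
  assert (eps / (2 * K) * K = eps / 2) by (field; lra).
  assert (Rabs lx * Rabs (a - x) + Rabs ly * Rabs (b - y) <= K * (eps / (2 * K))).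
  { assert (Rabs (a - x) <= eps / (2 * K)) by lra. assert (Rabs (b - y) <= eps / (2 * K)) by lra.
    assert (0 <= eps / (2 * K)) by lra. assert (HKd : K = Rabs lx + Rabs ly + 1) by reflexivity.
    clearbody K. subst K. nra. }
  assert (eps / (2 * K) <= eps / 2).
  { assert (1 <= K) by (unfold K; pose proof (Rabs_pos lx); pose proof (Rabs_pos ly); lra).
    assert (0 < eps / (2 * K)) by (apply Rdiv_lt_0_compat; lra). nra. }
  lra.
Qed.

Lemma cont_comp2 F p q t : 
  (forall eps, 0 < eps -> exists d, 0 < d /\ forall a b, Rabs (a - p t) < d -> Rabs (b - q t) < d -> Rabs (F a b - F (p t) (q t)) < eps) ->
  cont p t -> cont q t -> cont (fun s => F (p s) (q s)) t.
Proof.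
  intros HF Hp Hq eps Heps. destruct (HF eps Heps) as [d [Hd P]].
  destruct (Hp d Hd) as [d1 [Hd1 P1]]. destruct (Hq d Hd) as [d2 [Hd2 P2]].
  exists (Rmin d1 d2); split; [apply Rmin_pos; auto|]. intros y Hy.
  pose proof (Rmin_l d1 d2); pose proof (Rmin_r d1 d2). apply P; [apply P1|apply P2]; lra.
Qed.

Lemma cpt_cont u x : continuity_pt u x -> cont u x.
Proof.
  intros H eps Heps. destruct (H eps Heps) as [d [Hd P]]. exists d; split; auto.
  intros y Hy. destruct (Req_dec y x) as [->|Hne].
  - rewrite Rminus_diag_eq, Rabs_R0 by auto; auto.
  - apply P. split; [split; [exact I|auto]|]. unfold R_dist; auto.
Qed.

Lemma cont_mul u w x : cont u x -> cont w x -> cont (fun t => u t * w t) x.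
Proof. intros H1 H2. apply cpt_cont. apply continuity_pt_mult; apply cont_cpt; auto. Qed.

Definition Fcv (f : R -> R -> Cpx) r t : Cpx := (Fs f true r t, Fs f false r t).

Section Piece.
Variable f : R -> R -> Cpx.
Hypothesis hf : polar_analytic f.
Variables (rc thc : R -> R) (dr dth : nat -> R -> R) (i : nat) (u v : R).
Hypothesis Huv : u < v.
Hypothesis Hpos : forall t, u <= t <= v -> 0 < rc t.
Hypothesis Hr : C1_on rc (dr i) u v.
Hypothesis Ht : C1_on thc (dth i) u v.

Let c := cl u v.

Lemma Rc t : cont (fun x => rc (c x)) t.
Proof. apply cont_cl; [lra|]. intros s Hs. apply deriv_within_cont with (dr i); auto. apply (proj1 Hr); auto. Qed.
Lemma Tc t : cont (fun x => thc (c x)) t.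
Proof. apply cont_cl; [lra|]. intros s Hs. apply deriv_within_cont with (dth i); auto. apply (proj1 Ht); auto. Qed.
Lemma Dc t : cont (fun x => dr i (c x)) t.
Proof. apply cont_cl; [lra|]. intros s Hs eps Heps. exact (proj2 Hr s Hs eps Heps). Qed.
Lemma Ec t : cont (fun x => dth i (c x)) t.
Proof. apply cont_cl; [lra|]. intros s Hs eps Heps. exact (proj2 Ht s Hs eps Heps). Qed.
Lemma posc x : 0 < rc (c x).
Proof. apply Hpos. apply cl_in; lra. Qed.

Definition Gb b x := Fs f b (rc (c x)) (thc (c x)).
Definition gt b x := sel b (integrand f rc thc dr dth i (c x)).

Lemma C2_int x : C2 (fun x _ => integrand f rc thc dr dth i (c x)) x 0.
Proof.
  unfold integrand.
  apply (C2_mul (fun x _ => f (rc (c x)) (thc (c x)))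
                (fun x _ => Cmul (Cexpi (thc (c x))) (dr i (c x), rc (c x) * dth i (c x)))).
  - apply (C2_comp f (fun x => rc (c x)) (fun x => thc (c x))); [apply f_C2; auto; apply posc|apply Rc|apply Tc].
  - apply (C2_mul (fun x _ => Cexpi (thc (c x))) (fun x _ => (dr i (c x), rc (c x) * dth i (c x)))).
    + apply (C2_comp (fun _ t => Cexpi t) (fun x => rc (c x)) (fun x => thc (c x))); [apply C2_expi|apply Rc|apply Tc].
    + apply (C2_pair (fun x => dr i (c x)) (fun x => rc (c x) * dth i (c x))); [apply Dc|].
      apply (cont_mul (fun x => rc (c x)) (fun x => dth i (c x))); [apply Rc|apply Ec].
Qed.

Lemma gt_cont b x : continuous (gt b) x.
Proof. apply (C2_cont_sel b (fun x _ => integrand f rc thc dr dth i (c x)) x 0). apply C2_int. Qed.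

Lemma gt_ex b a w : ex_RInt (gt b) a w.
Proof. apply (@ex_RInt_continuous R_CompleteNormedModule). intros; apply gt_cont. Qed.

Lemma Gb_cont b x : cont (Gb b) x.
Proof.
  unfold Gb. apply (cont_comp2 (Fs f b) (fun x => rc (c x)) (fun x => thc (c x))); [|apply Rc|apply Tc].
  eapply diff_cont. apply Fs_diff; auto. apply posc.
Qed.

Lemma Gb_deriv b x : u < x < v -> is_derive (Gb b) x (gt b x).
Proof.
  intro Hx. apply is_derive_Reals.
  assert (E : gt b x = sel b (Ak f (rc (c x)) (thc (c x))) * dr i x + sel b (Bk f (rc (c x)) (thc (c x))) * dth i x).
  { unfold gt, c. rewrite cl_id by lra. destruct b; unfold sel, Ak, Bk, integrand, Cmul, Cexpi; simpl; ring. }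
  rewrite E. unfold Gb.
  apply (derivable_pt_lim_comp_2d (Fs f b) (fun t => rc (c t)) (fun t => thc (c t))).
  - apply Fs_diff; auto. apply posc.
  - apply interior_deriv; auto. apply (proj1 Hr); lra.
  - apply interior_deriv; auto. apply (proj1 Ht); lra.
Qed.

Lemma RI_deriv b x : is_derive (fun y => RInt (gt b) u y) x (gt b x).
Proof.
  apply (@is_derive_RInt R_NormedModule (gt b) (fun y => RInt (gt b) u y) u x).
  - apply filter_forall. intro y. apply (@RInt_correct R_CompleteNormedModule). apply gt_ex.
  - apply gt_cont.
Qed.

Lemma Gb_FTC b : Gb b v - Gb b u = RInt (gt b) u v.
Proof.
  set (Hf := fun x => Gb b x - RInt (gt b) u x).
  destruct (MVT_gen Hf u v (fun _ => 0)) as [c0 [_ Hc0]].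
  - intros x Hx. rewrite Rmin_left, Rmax_right in Hx by lra.
    pose proof (@is_derive_minus R_AbsRing R_NormedModule _ _ x _ _ (Gb_deriv b x Hx) (RI_deriv b x)) as D.
    rewrite minus_eq_zero in D. exact D.
  - intros x _. apply continuity_pt_minus.
    + apply cont_cpt. apply Gb_cont.
    + apply continuity_pt_filterlim. apply (@ex_derive_continuous R_AbsRing R_NormedModule).
      eexists. apply RI_deriv.
  - unfold Hf in Hc0. assert (Z : RInt (gt b) u u = 0) by (rewrite RInt_point; reflexivity). rewrite Z in Hc0. lra.
Qed.

Lemma piece_CRint :
  CRint (integrand f rc thc dr dth i) u v (Csub (Fcv f (rc v) (thc v)) (Fcv f (rc u) (thc u))).
Proof.
  assert (Hext : forall b, forall x, Rmin u v < x < Rmax u v -> gt b x = sel b (integrand f rc thc dr dth i x)).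
  { intros b x Hx. rewrite Rmin_left, Rmax_right in Hx by lra. unfold gt, c. rewrite cl_id by lra. auto. }
  assert (Hval : forall b, RInt (fun t => sel b (integrand f rc thc dr dth i t)) u v =
                 Fs f b (rc v) (thc v) - Fs f b (rc u) (thc u)).
  { intro b. rewrite <- (RInt_ext (gt b)) by apply Hext. rewrite <- Gb_FTC. unfold Gb, c.
    rewrite !cl_id by lra. auto. }
  assert (Hex : forall b, ex_RInt (fun t => sel b (integrand f rc thc dr dth i t)) u v).
  { intro b. apply (ex_RInt_ext (gt b)); [apply Hext|apply gt_ex]. }
  split.
  - exists (ex_RInt_Reals_0 _ _ _ (Hex true)). rewrite <- RInt_Reals. exact (Hval true).
  - exists (ex_RInt_Reals_0 _ _ _ (Hex false)). rewrite <- RInt_Reals. exact (Hval false).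
Qed.
End Piece.

Lemma line_int_val f (hf : polar_analytic f) a b rc thc n p dr dth :
  regular_curve a b rc thc n p dr dth ->
  line_integral f rc thc n p dr dth (Csub (Fcv f (rc b) (thc b)) (Fcv f (rc a) (thc a))).
Proof.
  intros [Hn [Hp0 [Hpn [Hinc [Hpos HC1]]]]].
  assert (Mono : forall k i, (i + k <= n)%nat -> p i <= p (i + k)%nat).
  { induction k; intros i Hik. - rewrite Nat.add_0_r; lra.
    - rewrite Nat.add_succ_r. specialize (IHk i ltac:(lia)). specialize (Hinc (i + k)%nat ltac:(lia)). lra. }
  assert (Bnd : forall i, (i <= n)%nat -> a <= p i <= b).
  { intros i Hi. split.
    - rewrite <- Hp0. apply (Mono i 0%nat). lia.
    - rewrite <- Hpn. pose proof (Mono (n - i)%nat i ltac:(lia)) as HM. replace (i + (n - i))%nat with n in HM by lia. lra. }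
  set (Wv := fun j => Fcv f (rc (p j)) (thc (p j))).
  exists (fun j => Csub (Wv (S j)) (Wv j)). split.
  - intros i Hi. destruct (HC1 i Hi) as [H1 H2].
    apply (piece_CRint f hf rc thc dr dth i (p i) (p (S i))); auto.
    intros t Ht. apply Hpos. pose proof (Bnd i ltac:(lia)). pose proof (Bnd (S i) ltac:(lia)). lra.
  - assert (T : forall m, Csum m (fun j => Csub (Wv (S j)) (Wv j)) = Csub (Wv m) (Wv 0%nat)).
    { induction m; simpl.
      - unfold Wv, C0, Csub; simpl. f_equal; ring.
      - rewrite IHm. unfold Cadd, Csub; simpl. f_equal; ring. }
    rewrite T. unfold Wv. rewrite Hpn, Hp0. reflexivity.
Qed.

Theorem proposition2 (f : R -> R -> Cpx) (hf : polar_analytic f)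
  (r1 th1 r2 th2 : R) (hr1 : 0 < r1) (hr2 : 0 < r2) :
  (exists v : Cpx,
     forall (a b : R) (rc thc : R -> R) (n : nat) (p : nat -> R)
            (dr dth : nat -> R -> R),
       regular_curve a b rc thc n p dr dth ->
       rc a = r1 -> thc a = th1 -> rc b = r2 -> thc b = th2 ->
       line_integral f rc thc n p dr dth v) /\
  (forall (a b : R) (rc thc : R -> R) (n : nat) (p : nat -> R)
          (dr dth : nat -> R -> R),
     regular_curve a b rc thc n p dr dth ->
     rc a = rc b -> thc a = thc b ->
     line_integral f rc thc n p dr dth C0).
Proof.
  split.
  - exists (Csub (Fcv f r2 th2) (Fcv f r1 th1)).
    intros a b rc thc n p dr dth Hc Ha1 Ha2 Hb1 Hb2.
    pose proof (line_int_val f hf a b rc thc n p dr dth Hc) as L.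
    rewrite Ha1, Ha2, Hb1, Hb2 in L. exact L.
  - intros a b rc thc n p dr dth Hc Ha1 Ha2.
    pose proof (line_int_val f hf a b rc thc n p dr dth Hc) as L.
    rewrite Ha1, Ha2 in L.
    replace C0 with (Csub (Fcv f (rc b) (thc b)) (Fcv f (rc b) (thc b))); auto.
    unfold Csub, C0; simpl. f_equal; ring.
Qed.
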